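(* Fix $n\geq 2$, $k\geq 1$, and let $K=J(2k+1,2m)$ with $|m|\geq 2$. Let $\phi_K(x,y)$ be the Riley polynomial of $K$ with respect to the presentation $\pi_1(S^3\setminus K)=\langle a,b\mid w^ma=bw^m\rangle$, $w=(ba^{-1})^kba(b^{-1}a)^k$. Then $\phi_K(2\cos(\pi/n),y)$ has a real root $y_n>2$ in the following cases: (1) $n\geq 3$ when $m\leq -3$; (2) $n\geq 4$ when $m=-2$; (3) $n\geq 5$ when $m=2$; (4) $n\geq 4$ when $m=3$; (5) $n\geq 3$ when $m\geq 4$.
   Context: $J(2k+1,2m)$ is the double twist knot (two-bridge knot with twist regions of $2k+1$ and $2m$ signed half-twists), whose group has the stated presentation with $a,b$ meridians. Riley polynomial: with $A=\begin{bmatrix}s&1\\0&s^{-1}\end{bmatrix}$, $B=\begin{bmatrix}s&0\\2-y&s^{-1}\end{bmatrix}$ and $V$ the word $w^m$ evaluated at $A,B$, the $(1,2)$-entry of $VA-BV$ equals $f(s+s^{-1},y)$ for some $f\in\mathbb{Z}[x,y]$, and $\phi_K:=f$. Explicitly, with Chebyshev polynomials $S_{-1}=0$, $S_0=1$, $S_1=z$, $S_{n+1}=zS_n-S_{n-1}$, $\lambda=x^2-y-(y-2)(y+2-x^2)S_k(y)S_{k-1}(y)$, $\alpha=1+(y+2-x^2)S_{k-1}(y)(S_k(y)-S_{k-1}(y))$: $\phi_K=S_{m-1}(\lambda)\alpha-S_{m-2}(\lambda)$ for $m\geq 1$ and $\phi_K=S_{|m|}(\lambda)-S_{|m|-1}(\lambda)\alpha$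 for $m\leq-1$. *)

(* Defs.v *)
From Stdlib Require Import Reals ZArith.
Open Scope R_scope.

(* Chebyshev-type polynomials S_{-1}=0, S_0=1, S_{j+1} = z S_j - S_{j-1}.
   cheb_pair j z = (S_{j-1}(z), S_j(z)) for j : nat. *)
Fixpoint cheb_pair (j : nat) (z : R) : R * R :=
  match j with
  | O => (0, 1)
  | Datatypes.S j' => let (a, b) := cheb_pair j' z in (b, z * b - a)
  end.

Definition Cheb (j : nat) (z : R) : R := snd (cheb_pair j z).
Definition Cheb_pred (j : nat) (z : R) : R := fst (cheb_pair j z).

Definition riley_lambda (k : nat) (x y : R) : R :=
  x ^ 2 - y - (y - 2) * (y + 2 - x ^ 2) * Cheb k y * Cheb_pred k y.

Definition riley_alpha (k : nat) (x y : R) : R :=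
  1 + (y + 2 - x ^ 2) * Cheb_pred k y * (Cheb k y - Cheb_pred k y).

(* Riley polynomial phi_K(x,y) of K = J(2k+1,2m), evaluated at real x, y.
   m >= 1 : S_{m-1}(lambda) alpha - S_{m-2}(lambda)
   m <= -1: S_{|m|}(lambda) - S_{|m|-1}(lambda) alpha
   (m = 0 is not a knot of the family; value 0 is an arbitrary convention.) *)
Definition riley_phi (k : nat) (m : Z) (x y : R) : R :=
  let l := riley_lambda k x y in
  let a := riley_alpha k x y in
  match m with
  | Zpos p => Cheb_pred (Pos.to_nat p) l * a - Cheb_pred (Pos.to_nat p - 1) l
  | Zneg p => Cheb (Pos.to_nat p) l - Cheb_pred (Pos.to_nat p) l * a
  | Z0 => 0
  end.

(* Main.v *)
Require Import Defs.
From Stdlib Require Import Reals ZArith Lra Lia.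
Open Scope R_scope.

Lemma cid : continuity (fun x => x).
Proof. exact (derivable_continuous _ derivable_id). Qed.
Lemma cconst c : continuity (fun _ => c).
Proof. apply continuity_const. intros a b; reflexivity. Qed.
Lemma cmul f g : continuity f -> continuity g -> continuity (fun x => f x * g x).
Proof. intros; exact (continuity_mult f g H H0). Qed.
Lemma cminus f g : continuity f -> continuity g -> continuity (fun x => f x - g x).
Proof. intros; exact (continuity_minus f g H H0). Qed.
Lemma cplus f g : continuity f -> continuity g -> continuity (fun x => f x + g x).
Proof. intros; exact (continuity_plus f g H H0). Qed.

Lemma cont_ext (f g : R -> R) : (forall y, f y = g y) -> continuity f -> continuity g.
Proof. intros E H y. apply (continuity_pt_locally_ext f g 1 y); [lra| intros; apply E | apply H]. Qed.

Lemma cp_S j z : cheb_pair (S j) z =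
  (snd (cheb_pair j z), z * snd (cheb_pair j z) - fst (cheb_pair j z)).
Proof. simpl. destruct (cheb_pair j z); reflexivity. Qed.
Lemma Cheb_S j z : Cheb (S j) z = z * Cheb j z - Cheb_pred j z.
Proof. unfold Cheb, Cheb_pred; rewrite cp_S; reflexivity. Qed.
Lemma Cheb_pred_S j z : Cheb_pred (S j) z = Cheb j z.
Proof. unfold Cheb, Cheb_pred; rewrite cp_S; reflexivity. Qed.
Lemma Cheb_0 z : Cheb 0 z = 1. Proof. reflexivity. Qed.
Lemma Cheb_pred_0 z : Cheb_pred 0 z = 0. Proof. reflexivity. Qed.

Lemma cont_cheb j f : continuity f ->
  continuity (fun y => Cheb j (f y)) /\ continuity (fun y => Cheb_pred j (f y)).
Proof.
  intro Hf. induction j as [|j [IH1 IH2]].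
  - split; [apply (cconst 1) | apply (cconst 0)].
  - split.
    + apply (cont_ext (fun y => f y * Cheb j (f y) - Cheb_pred j (f y))).
      * intros; rewrite Cheb_S; reflexivity.
      * apply cminus; [apply cmul|]; assumption.
    + apply (cont_ext (fun y => Cheb j (f y))).
      * intros; rewrite Cheb_pred_S; reflexivity.
      * apply IH1.
Qed.

Lemma cheb_ge2 j z : 2 <= z -> 0 <= Cheb_pred j z /\ 1 <= Cheb j z - Cheb_pred j z.
Proof.
  intro Hz. induction j as [|j [H1 H2]].
  - rewrite Cheb_0, Cheb_pred_0; lra.
  - rewrite Cheb_S, Cheb_pred_S.
    assert (0 <= (z-2) * Cheb j z) by (apply Rmult_le_pos; lra).
    split; nra.
Qed.

Lemma cheb_2 j : Cheb j 2 = INR j + 1 /\ Cheb_pred j 2 = INR j.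
Proof.
  induction j as [|j [H1 H2]].
  - rewrite Cheb_0, Cheb_pred_0; simpl; lra.
  - rewrite Cheb_S, Cheb_pred_S, H1, H2, S_INR; split; ring.
Qed.

Lemma cheb_m2 j : Cheb j (-2) = (-1)^j * (INR j + 1) /\ Cheb_pred j (-2) = - ((-1)^j * INR j).
Proof.
  induction j as [|j [H1 H2]].
  - rewrite Cheb_0, Cheb_pred_0; simpl; lra.
  - rewrite Cheb_S, Cheb_pred_S, H1, H2, S_INR; simpl pow; split; ring.
Qed.

Lemma cheb_trig j psi : sin psi * Cheb j (2 * cos psi) = sin (INR (S j) * psi) /\
  sin psi * Cheb_pred j (2 * cos psi) = sin (INR j * psi).
Proof.
  induction j as [|j [H1 H2]].
  - rewrite Cheb_0, Cheb_pred_0; simpl. rewrite Rmult_0_l, sin_0, Rmult_1_l. split; ring.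
  - rewrite Cheb_S, Cheb_pred_S. split; [|exact H1].
    replace (sin psi * (2 * cos psi * Cheb j (2 * cos psi) - Cheb_pred j (2 * cos psi)))
      with (2 * cos psi * (sin psi * Cheb j (2 * cos psi)) - sin psi * Cheb_pred j (2 * cos psi)) by ring.
    rewrite H1, H2.
    replace (INR (S (S j)) * psi) with (INR (S j) * psi + psi) by (rewrite (S_INR (S j)); ring).
    replace (INR j * psi) with (INR (S j) * psi - psi) by (rewrite (S_INR j); ring).
    rewrite sin_plus, sin_minus. ring.
Qed.

Lemma sin_kpi j d : sin (INR j * PI + d) = (-1)^j * sin d.
Proof.
  induction j as [|j IH].
  - simpl. rewrite Rmult_0_l, Rplus_0_l; ring.
  - replace (INR (S j) * PI + d) with ((INR j * PI + d) + PI) by (rewrite S_INR; ring).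
    rewrite neg_sin, IH. simpl; ring.
Qed.

Lemma m1sq j : (-1)^j * (-1)^j = 1.
Proof. rewrite <- Rpow_mult_distr. replace (-1 * -1) with 1 by ring. apply pow1. Qed.

Lemma div_lt a b c : 0 < c -> a < b * c -> a / c < b.
Proof. intros Hc H. apply Rmult_lt_reg_r with c; auto. unfold Rdiv; rewrite Rmult_assoc, Rinv_l; lra. Qed.
Lemma div_gt a b c : 0 < c -> b * c < a -> b < a / c.
Proof. intros Hc H. apply Rmult_lt_reg_r with c; auto. unfold Rdiv; rewrite Rmult_assoc, Rinv_l; lra. Qed.
Lemma div_le a b c : 0 < c -> a <= b * c -> a / c <= b.
Proof. intros Hc H. apply Rmult_le_reg_r with c; auto. unfold Rdiv; rewrite Rmult_assoc, Rinv_l; lra. Qed.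
Lemma div_ge a b c : 0 < c -> b * c <= a -> b <= a / c.
Proof. intros Hc H. apply Rmult_le_reg_r with c; auto. unfold Rdiv; rewrite Rmult_assoc, Rinv_l; lra. Qed.

Lemma key N (L B G : R -> R) :
 continuity L -> continuity B -> continuity G ->
 (forall y, 2 <= y -> 0 < B y) -> (forall y, 2 <= y -> 0 < G y) ->
 -2 < L 2 -> L 7 < -2 ->
 (exists y0, 2 <= y0 /\ (-1)^N * (B y0 * Cheb N (L y0) - G y0 * Cheb_pred N (L y0)) < 0) ->
 exists y, 2 < y /\ B y * Cheb N (L y) - G y * Cheb_pred N (L y) = 0.
Proof.
  intros HL HB HG Bp Gp L2 L7 [y0 [Hy0 Hs0]].
  set (F := fun y => B y * Cheb N (L y) - G y * Cheb_pred N (L y)).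
  fold (F y0) in Hs0.
  destruct (cont_cheb N L HL) as [C1 C2].
  assert (HF : continuity F) by (apply cminus; apply cmul; assumption).
  destruct (IVT_cor (fun y => L y + 2) 2 7) as [ya [[Ha1 Ha2] Ha]].
  { apply cplus; [assumption | apply cconst]. }
  { lra. }
  { assert (0 < L 2 + 2) by lra. assert (L 7 + 2 < 0) by lra. nra. }
  simpl in Ha.
  assert (Hya : 2 < ya) by (destruct (Req_dec ya 2); [subst; lra | lra]).
  assert (Hsa : 0 < (-1)^N * F ya).
  { unfold F. replace (L ya) with (-2) by lra.
    destruct (cheb_m2 N) as [E1 E2]. rewrite E1, E2.
    replace ((-1) ^ N * (B ya * ((-1) ^ N * (INR N + 1)) - G ya * - ((-1) ^ N * INR N)))
      with (((-1)^N * (-1)^N) * (B ya * (INR N + 1) + G ya * INR N)) by ring.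
    rewrite m1sq. pose proof (pos_INR N). pose proof (Bp ya ltac:(lra)). pose proof (Gp ya ltac:(lra)).
    nra. }
  assert (Hprod : F y0 * F ya < 0).
  { replace (F y0 * F ya) with (((-1)^N * (-1)^N) * (F y0 * F ya)) by (rewrite m1sq; ring).
    replace (((-1)^N * (-1)^N) * (F y0 * F ya)) with (((-1)^N * F y0) * ((-1)^N * F ya)) by ring.
    nra. }
  destruct (Rle_dec y0 ya) as [Hle|Hle].
  - destruct (IVT_cor F y0 ya HF Hle ltac:(lra)) as [z [[Hz1 Hz2] Hz]].
    exists z. split; [|exact Hz].
    destruct (Rle_lt_dec z 2) as [Hz3|Hz3]; [|exact Hz3].
    exfalso. assert (z = y0) by lra. subst z. rewrite Hz in Hs0. lra.
  - destruct (IVT_cor F ya y0 HF ltac:(lra) ltac:(lra)) as [z [[Hz1 Hz2] Hz]].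
    exists z. split; [lra|exact Hz].
Qed.

Lemma gen M n (L B G : R -> R) :
 continuity L -> (forall y, 2 <= y -> 0 < G y) -> L 7 < -2 ->
 L 2 = 2 * cos (2 * PI / INR n) ->
 (2 * (M + 3) < n * (M + 1))%nat ->
 exists y0, 2 <= y0 /\ (-1)^(S (S M)) * (B y0 * Cheb (S (S M)) (L y0) - G y0 * Cheb_pred (S (S M)) (L y0)) < 0.
Proof.
  intros HL Gp L7 L2 Hnat.
  assert (Hn : (0 < n)%nat) by lia.
  assert (Hn' : 0 < INR n) by (apply lt_0_INR; lia).
  pose proof PI_RGT_0 as Hpi.
  pose proof (pos_INR M) as HM.
  set (psi := (INR M + 1) * PI / (INR M + 3)).
  assert (Hreal : 2 * (INR M + 3) < INR n * (INR M + 1)).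
  { apply lt_INR in Hnat. rewrite !mult_INR, !plus_INR in Hnat.
    replace (INR 3) with 3 in Hnat by (simpl; ring). replace (INR 2) with 2 in Hnat by (simpl; ring).
    replace (INR 1) with 1 in Hnat by (simpl; ring). exact Hnat. }
  assert (Hpsi1 : 0 < psi) by (apply div_gt; nra).
  assert (Hpsi2 : psi < PI) by (apply div_lt; nra).
  assert (Hang : 2 * PI / INR n < psi).
  { apply div_lt; auto. unfold psi.
    apply Rmult_lt_reg_r with (INR M + 3); [lra|].
    replace ((INR M + 1) * PI / (INR M + 3) * INR n * (INR M + 3)) with ((INR M + 1) * PI * INR n) by (field; lra).
    nra. }
  assert (Hang0 : 0 < 2 * PI / INR n) by (apply div_gt; lra).
  assert (Hcos : cos psi < cos (2 * PI / INR n)) by (apply cos_decreasing_1; lra).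
  pose proof (COS_bound psi) as Hcb.
  destruct (IVT_cor (fun y => L y - 2 * cos psi) 2 7) as [yb [[Hb1 Hb2] Hb]].
  { apply cminus; [assumption | apply cconst]. }
  { lra. }
  { assert (0 < L 2 - 2 * cos psi) by lra. assert (L 7 - 2 * cos psi < 0) by lra. nra. }
  simpl in Hb. exists yb. split; [lra|].
  replace (L yb) with (2 * cos psi) by lra.
  destruct (cheb_trig (S (S M)) psi) as [T1 T2].
  assert (Hs : 0 < sin psi) by (apply sin_gt_0; lra).
  replace (INR (S (S (S M))) * psi) with (INR (S M) * PI + 0) in T1.
  2:{ unfold psi. rewrite !S_INR. field. lra. }
  rewrite sin_kpi, sin_0, Rmult_0_r in T1.
  assert (C0 : Cheb (S (S M)) (2 * cos psi) = 0).
  { destruct (Rmult_integral _ _ T1); [lra|assumption]. }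
  set (d := 2 * PI / (INR M + 3)).
  replace (INR (S (S M)) * psi) with (INR M * PI + d) in T2.
  2:{ unfold psi, d. rewrite !S_INR. field. lra. }
  rewrite sin_kpi in T2.
  assert (Hd : 0 < sin d) by (apply sin_gt_0; unfold d; [apply div_gt | apply div_lt]; nra).
  rewrite C0.
  set (P := Cheb_pred (S (S M)) (2 * cos psi)) in *.
  assert (HsP : sin psi * ((-1)^M * P) = sin d).
  { replace (sin psi * ((-1)^M * P)) with ((-1)^M * (sin psi * P)) by ring.
    rewrite T2. rewrite <- Rmult_assoc, m1sq. ring. }
  assert (HP : 0 < (-1)^M * P).
  { apply Rmult_lt_reg_l with (sin psi); [lra|]. rewrite HsP. lra. }
  pose proof (Gp yb ltac:(lra)).
  replace ((-1) ^ S (S M) * (B yb * 0 - G yb * P)) with (- (G yb * ((-1)^M * P))) by (simpl; ring).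
  nra.
Qed.

Lemma slb a : sin_lb a = a - a^3/6 + a^5/120 - a^7/5040.
Proof. unfold sin_lb, sin_approx, sin_term. simpl sum_f_R0. field. Qed.
Lemma s10 : 1/4 <= sin (PI/10).
Proof. pose proof PI2_3_2. pose proof PI_4. destruct (SIN (PI/10)) as [Hs _]; try lra. rewrite slb in Hs.
 set (a := PI/10) in *. assert (0.3 <= a <= 0.4) by (unfold a; lra).
 assert (a^7 <= 1^7) by (apply pow_incr; lra). rewrite pow1 in H2.
 assert (0 <= a^5) by (apply pow_le; lra). assert (a^3 <= 0.4^3) by (apply pow_incr; lra). lra. Qed.

Lemma INRn n : INR n = IZR (Z.of_nat n).
Proof. apply INR_IZR_INZ. Qed.

Lemma ang3 : cos (2*PI/INR 3) = -1/2.
Proof.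
  replace (2*PI/INR 3) with (2*(PI/3)) by (replace (INR 3) with 3 by (simpl; ring); field).
  rewrite cos_2a_cos, cos_PI3. field.
Qed.
Lemma ang4 : cos (2*PI/INR 4) = 0.
Proof.
  replace (2*PI/INR 4) with (PI/2) by (replace (INR 4) with 4 by (simpl; ring); field).
  apply cos_PI2.
Qed.
Lemma ang456 n : (4 <= n <= 6)%nat -> 0 <= cos (2*PI/INR n) <= 1/2.
Proof.
  intros Hn. pose proof PI_RGT_0.
  assert (H4 : 4 <= INR n) by (replace 4 with (INR 4) by (simpl; ring); apply le_INR; lia).
  assert (H6 : INR n <= 6) by (replace 6 with (INR 6) by (simpl; ring); apply le_INR; lia).
  assert (a1 : PI/3 <= 2*PI/INR n) by (apply div_ge; [lra| unfold Rdiv; nra]).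
  assert (a2 : 2*PI/INR n <= PI/2) by (apply div_le; [lra| unfold Rdiv; nra]).
  split.
  - rewrite <- cos_PI2. apply cos_decr_1; lra.
  - rewrite <- cos_PI3. apply cos_decr_1; lra.
Qed.
Lemma ang5 n : (5 <= n)%nat -> 1/4 <= cos (2*PI/INR n).
Proof.
  intros Hn. pose proof PI_RGT_0.
  assert (H5 : 5 <= INR n) by (replace 5 with (INR 5) by (simpl; ring); apply le_INR; lia).
  assert (a1 : 0 <= 2*PI/INR n) by (apply div_ge; lra).
  assert (a2 : 2*PI/INR n <= 2*PI/5) by (apply div_le; [lra| unfold Rdiv; nra]).
  assert (cos (2*PI/5) <= cos (2*PI/INR n)) by (apply cos_decr_1; lra).
  rewrite <- sin_shift in H0. replace (PI/2 - 2*PI/5) with (PI/10) in H0 by field.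
  pose proof s10. lra.
Qed.
Lemma ang_gt n : (3 <= n)%nat -> -1 < cos (2*PI/INR n).
Proof.
  intros Hn. pose proof PI_RGT_0.
  assert (H3 : 3 <= INR n) by (replace 3 with (INR 3) by (simpl; ring); apply le_INR; lia).
  assert (a1 : 0 <= 2*PI/INR n) by (apply div_ge; lra).
  assert (a2 : 2*PI/INR n < PI) by (apply div_lt; [lra| nra]).
  rewrite <- cos_PI. apply cos_decreasing_1; lra.
Qed.

Lemma case2 n (L B G : R -> R) :
 continuity L -> (forall y, 2 <= y -> 0 < B y) -> (forall y, 2 <= y -> 0 < G y) -> L 7 < -2 ->
 L 2 = 2 * cos (2 * PI / INR n) -> (4 <= n)%nat ->
 exists y0, 2 <= y0 /\ (-1)^2 * (B y0 * Cheb 2 (L y0) - G y0 * Cheb_pred 2 (L y0)) < 0.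
Proof.
  intros HL Bp Gp L7 L2 Hn.
  destruct (le_lt_dec 7 n) as [H7|H7].
  - apply (gen 0 n); auto. lia.
  - exists 2. split; [lra|].
    destruct (ang456 n ltac:(lia)) as [c1 c2].
    pose proof (Bp 2 ltac:(lra)). pose proof (Gp 2 ltac:(lra)).
    set (l := L 2) in *. set (b := B 2) in *. set (g := G 2) in *.
    unfold Cheb, Cheb_pred; simpl.
    destruct (Rlt_or_le l 1) as [Hl|Hl].
    + assert (0 <= l) by lra. assert (l*l < 1) by nra.
      assert (b * (l*l - 1) < 0) by nra. assert (0 <= g * l) by nra. nra.
    + assert (l = 1) by lra. replace l with 1. nra.
Qed.

Lemma case3 n N (L B G : R -> R) :
 continuity L -> (forall y, 2 <= y -> 0 < B y) -> (forall y, 2 <= y -> 0 < G y) -> L 7 < -2 ->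
 L 2 = 2 * cos (2 * PI / INR n) -> (3 <= n)%nat -> (3 <= N)%nat ->
 exists y0, 2 <= y0 /\ (-1)^N * (B y0 * Cheb N (L y0) - G y0 * Cheb_pred N (L y0)) < 0.
Proof.
  intros HL Bp Gp L7 L2 Hn HN.
  destruct (lt_dec (2 * (N - 2 + 3)) (n * (N - 2 + 1))) as [Hg|Hg].
  - replace N with (S (S (N - 2))) by lia. apply (gen (N-2) n); auto.
  - exists 2. split; [lra|].
    pose proof (Bp 2 ltac:(lra)). pose proof (Gp 2 ltac:(lra)).
    assert (Hc : ((N = 3 /\ n = 3) \/ (N = 3 /\ n = 4) \/ (N = 4 /\ n = 3) \/ (N = 5 /\ n = 3))%nat) by nia.
    destruct Hc as [[-> ->]|[[-> ->]|[[-> ->]|[-> ->]]]].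
    + rewrite ang3 in L2. rewrite L2. unfold Cheb, Cheb_pred; simpl. nra.
    + rewrite ang4 in L2. rewrite L2. unfold Cheb, Cheb_pred; simpl. nra.
    + rewrite ang3 in L2. rewrite L2. unfold Cheb, Cheb_pred; simpl. nra.
    + rewrite ang3 in L2. rewrite L2. unfold Cheb, Cheb_pred; simpl. nra.
Qed.

Theorem theorem5p5 (n k : nat) (m : Z)
  (hn : (2 <= n)%nat) (hk : (1 <= k)%nat) (hm : (2 <= Z.abs m)%Z)
  (hcase : ((m <= -3)%Z /\ (3 <= n)%nat) \/
           (m = (-2)%Z /\ (4 <= n)%nat) \/
           (m = 2%Z /\ (5 <= n)%nat) \/
           (m = 3%Z /\ (4 <= n)%nat) \/
           ((4 <= m)%Z /\ (3 <= n)%nat)) :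
  exists y : R, 2 < y /\ riley_phi k m (2 * cos (PI / INR n)) y = 0.
Proof.
  set (x := 2 * cos (PI / INR n)).
  set (L := fun y => riley_lambda k x y). set (A := fun y => riley_alpha k x y).
  assert (Hn3 : (3 <= n)%nat) by lia.
  assert (Hn0 : 0 < INR n) by (apply lt_0_INR; lia).
  assert (Hx2 : x^2 <= 4) by (unfold x; pose proof (COS_bound (PI / INR n)); nra).
  destruct (cont_cheb k (fun y => y) cid) as [C1 C2].
  assert (HL : continuity L).
  { unfold L, riley_lambda.
    apply cminus; [apply cminus; [apply cconst|apply cid]|].
    apply cmul; [apply cmul; [apply cmul|]|]; try assumption.
    - apply cminus; [apply cid|apply cconst].
    - apply cminus; [apply cplus; [apply cid|apply cconst]|apply cconst]. }
  assert (HA : continuity A).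
  { unfold A, riley_alpha.
    apply cplus; [apply cconst|].
    apply cmul; [apply cmul|]; try assumption.
    - apply cminus; [apply cplus; [apply cid|apply cconst]|apply cconst].
    - apply cminus; assumption. }
  assert (Apos : forall y, 2 <= y -> 0 < A y).
  { intros y Hy. unfold A, riley_alpha. destruct (cheb_ge2 k y Hy) as [P1 P2].
    assert (0 <= (y + 2 - x^2) * Cheb_pred k y) by (apply Rmult_le_pos; lra).
    assert (0 <= (y + 2 - x^2) * Cheb_pred k y * (Cheb k y - Cheb_pred k y)) by (apply Rmult_le_pos; lra).
    lra. }
  assert (L7 : L 7 < -2).
  { unfold L, riley_lambda. destruct (cheb_ge2 k 7 ltac:(lra)) as [P1 P2].
    assert (0 <= (7 - 2) * (7 + 2 - x^2)) by (apply Rmult_le_pos; lra).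
    assert (0 <= (7 - 2) * (7 + 2 - x^2) * Cheb k 7) by (apply Rmult_le_pos; lra).
    assert (0 <= (7 - 2) * (7 + 2 - x^2) * Cheb k 7 * Cheb_pred k 7) by (apply Rmult_le_pos; lra).
    lra. }
  assert (L2 : L 2 = 2 * cos (2 * PI / INR n)).
  { unfold L, riley_lambda, x.
    replace (2 * PI / INR n) with (2 * (PI / INR n)) by (field; lra).
    rewrite cos_2a_cos. ring. }
  assert (L2gt : -2 < L 2) by (rewrite L2; pose proof (ang_gt n Hn3); lra).
  assert (Lx : L 2 = x^2 - 2) by (unfold L, riley_lambda; ring).
  assert (A2 : A 2 = 1 + (4 - x^2) * INR k).
  { unfold A, riley_alpha. destruct (cheb_2 k) as [E1 E2]. rewrite E1, E2. ring. }
  assert (Bc : continuity (fun _ : R => 1)) by apply cconst.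
  assert (Bp : forall y : R, 2 <= y -> 0 < (fun _ : R => 1) y) by (intros; lra).
  destruct m as [|p|p]; [simpl in hm; lia| |].
  - pose proof (positive_nat_Z p) as HP.
    assert (E : forall y, riley_phi k (Z.pos p) x y =
       A y * Cheb (Pos.to_nat p - 1) (L y) - 1 * Cheb_pred (Pos.to_nat p - 1) (L y)).
    { intro y. unfold riley_phi. cbv zeta.
      destruct (Pos.to_nat p) as [|P'] eqn:EP; [lia|].
      rewrite Cheb_pred_S. replace (S P' - 1)%nat with P' by lia. unfold A, L. ring. }
    set (N := (Pos.to_nat p - 1)%nat) in *.
    assert (Hc : ((N = 1 /\ 5 <= n) \/ (N = 2 /\ 4 <= n) \/ (3 <= N /\ 3 <= n))%nat) by lia.
    destruct (key N L A (fun _ => 1) HL HA Bc Apos Bp L2gt L7) as [y [Hy Hy0]].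
    2:{ exists y. split; [exact Hy|]. rewrite E. exact Hy0. }
    destruct Hc as [[HN Hn]|[[HN Hn]|[HN Hn]]].
    + rewrite HN. exists 2. split; [lra|].
      pose proof (ang5 n Hn). rewrite A2.
      assert (1/2 <= L 2 <= 2) by (rewrite L2; pose proof (COS_bound (2 * PI / INR n)); lra).
      assert (1 <= INR k) by (replace 1 with (INR 1) by reflexivity; apply le_INR; lia).
      unfold Cheb, Cheb_pred; simpl.
      assert (0 <= (2 - L 2) * (INR k - 1)) by (apply Rmult_le_pos; lra).
      assert (0 <= (2 - L 2) * (INR k - 1) * L 2) by (apply Rmult_le_pos; lra).
      replace (4 - x^2) with (2 - L 2) by lra. nra.
    + rewrite HN. apply (case2 n); auto.
    + apply (case3 n); auto.
  - pose proof (positive_nat_Z p) as HP.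
    assert (E : forall y, riley_phi k (Z.neg p) x y =
       1 * Cheb (Pos.to_nat p) (L y) - A y * Cheb_pred (Pos.to_nat p) (L y)).
    { intro y. unfold riley_phi. cbv zeta. unfold A, L. ring. }
    set (N := Pos.to_nat p) in *.
    assert (Hc : ((N = 2 /\ 4 <= n) \/ (3 <= N /\ 3 <= n))%nat) by lia.
    destruct (key N L (fun _ => 1) A HL Bc HA Bp Apos L2gt L7) as [y [Hy Hy0]].
    2:{ exists y. split; [exact Hy|]. rewrite E. exact Hy0. }
    destruct Hc as [[HN Hn]|[HN Hn]].
    + rewrite HN. apply (case2 n); auto.
    + apply (case3 n); auto.
Qed.
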